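(* Let $P$ and $W$ be finite point sets in the plane with $|P|>1$, $|W|>1$ and $P\cup W$ in general position. For $p\in P$ let $V(p)$ be the (closed, convex, possibly unbounded polygonal) Voronoi region of $p$ in the Voronoi diagram of $W\cup\{p\}$. Then for distinct $p,q\in P$: (i) the set $\partial V(p)\cap\partial V(q)$ is either empty, or consists of at most two points, or is a single connected subset of a line (a segment or ray); and if $V(p)\cap V(q)\ne\varnothing$ then $\partial V(p)\cap\partial V(q)\neq\varnothing$. (ii) If $W\neq\{p,q\}$, then $p$ and $q$ are adjacent in $\mathrm{DG}^-(P,W)$ if and only if $\partial V(p)\cap\partial V(q)\neq\varnothing$.
   Context: Let $P$ (the vertices) and $W$ (the witnesses) be finite point sets in $\mathbb{R}^2$; $P$ and $W$ may share points. The witness Delaunay graph $\mathrm{DG}^-(P,W)$ is the graph with vertex set $P$ in which distinct $x,y\in P$ are adjacent if and only if there is an open disk containing no point of $W$ whose bounding circle passes through $x$ and $y$. General position of $P\cup W$ means that no three distinct points of $P\cup W$ are collinear and no four distinct points of $P\cup W$ are concyclic. For a finite set $Q$ and $a\in Q$, the Voronoi region of $a$ is $\{x\in\mathbb{R}^2: |x-a|\le |x-b| \text{ for all } b\in Q\}$. *)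

(* Defs.v *)
From Stdlib Require Import Reals List.
Open Scope R_scope.

Definition point : Type := (R * R)%type.

Definition dist2 (x y : point) : R :=
  (fst x - fst y) ^ 2 + (snd x - snd y) ^ 2.

Definition collinear (a b c : point) : Prop :=
  (fst b - fst a) * (snd c - snd a) - (snd b - snd a) * (fst c - fst a) = 0.

Definition concyclic (a b c d : point) : Prop :=
  exists (o : point) (r2 : R),
    dist2 a o = r2 /\ dist2 b o = r2 /\ dist2 c o = r2 /\ dist2 d o = r2.

Definition general_position (S : point -> Prop) : Prop :=
  (forall a b c, S a -> S b -> S c -> a <> b -> a <> c -> b <> c ->
     ~ collinear a b c) /\
  (forall a b c d, S a -> S b -> S c -> S d ->
     a <> b -> a <> c -> a <> d -> b <> c -> b <> d -> c <> d ->
     ~ concyclic a b c d).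

Definition voronoi_region (Q : list point) (a : point) (x : point) : Prop :=
  forall b, In b Q -> dist2 x a <= dist2 x b.

Definition Vreg (W : list point) (p : point) : point -> Prop :=
  voronoi_region (p :: W) p.

Definition boundary (S : point -> Prop) (x : point) : Prop :=
  forall eps, 0 < eps ->
    (exists y, S y /\ dist2 x y < eps) /\
    (exists z, ~ S z /\ dist2 x z < eps).

Definition witness_DG_adj (P W : list point) (x y : point) : Prop :=
  In x P /\ In y P /\ x <> y /\
  exists (c : point) (r2 : R), 0 < r2 /\
    dist2 x c = r2 /\ dist2 y c = r2 /\
    forall w, In w W -> ~ (dist2 w c < r2).

Definition line_pt (a d : point) (t : R) : point :=
  (fst a + t * fst d, snd a + t * snd d).

Definition connected_subset_of_line (S : point -> Prop) : Prop :=
  (exists a d : point, d <> (0, 0) /\ forall x, S x -> exists t, x = line_pt a d t) /\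
  (forall x y t, S x -> S y -> 0 <= t <= 1 ->
     S (line_pt x (fst y - fst x, snd y - snd x) t)).

(* Main.v *)
Require Import Defs.
From Stdlib Require Import Reals List Lra Psatz Classical.
Open Scope R_scope.

Lemma dist2_sym x y : dist2 x y = dist2 y x.
Proof. destruct x, y; unfold dist2; simpl; ring. Qed.

Lemma dist2_nonneg x y : 0 <= dist2 x y.
Proof. unfold dist2; apply Rplus_le_le_0_compat; apply pow2_ge_0. Qed.

Lemma dist2_self x : dist2 x x = 0.
Proof. destruct x; unfold dist2; simpl; ring. Qed.

Lemma dist2_zero x y : dist2 x y = 0 -> x = y.
Proof. destruct x as [a b], y as [c d]; unfold dist2; simpl; intro H.
  pose proof (pow2_ge_0 (a-c)); pose proof (pow2_ge_0 (b-d)).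
  assert (a - c = 0) by nra. assert (b - d = 0) by nra. f_equal; lra. Qed.

Lemma dist2_pos x y : x <> y -> 0 < dist2 x y.
Proof. intro H. destruct (Rle_lt_or_eq_dec 0 (dist2 x y) (dist2_nonneg x y)); auto.
  exfalso; apply H; apply dist2_zero; auto. Qed.

Lemma Vreg_intro W p x : (forall b, In b W -> dist2 x p <= dist2 x b) -> Vreg W p x.
Proof. intros H b [<-|Hb]; [lra| auto]. Qed.

Lemma small_lin (c1 c2 k : R) : 0 < k -> exists eps, 0 < eps /\
  forall v1 v2, v1^2 + v2^2 < eps -> Rabs (2*(v1*c1 + v2*c2)) < k.
Proof.
  intros Hk. set (C := c1^2 + c2^2). assert (HC: 0 <= C) by (unfold C; nra).
  set (eps := k^2 / (4*C+1)).
  assert (He : eps * (4*C+1) = k^2) by (unfold eps; field; lra).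
  assert (Hep : 0 < eps) by (unfold eps; apply Rdiv_lt_0_compat; nra).
  exists eps; split; auto. intros v1 v2 Hv.
  set (s := v1*c1 + v2*c2).
  assert (Hcs : s^2 <= (v1^2+v2^2) * C) by (unfold s, C; pose proof (pow2_ge_0 (v1*c2-v2*c1)); nra).
  assert (H2 : (v1^2+v2^2) * C <= eps * C) by nra.
  assert (H3 : (2*s)^2 < k^2) by nra.
  apply Rabs_def1; nra.
Qed.

Lemma bd_in W p x : boundary (Vreg W p) x -> Vreg W p x.
Proof.
  intros H b Hb. destruct (Rle_dec (dist2 x p) (dist2 x b)) as [|Hn]; auto.
  exfalso. apply Rnot_le_lt in Hn.
  set (k := dist2 x p - dist2 x b).
  destruct (small_lin (fst b - fst p) (snd b - snd p) k) as [eps [He Hs]]; [unfold k; lra|].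
  destruct (H eps He) as [[y [Hy Hd]] _].
  specialize (Hy b Hb).
  assert (E: dist2 y p - dist2 y b = k + 2*((fst y - fst x)*(fst b - fst p) + (snd y - snd x)*(snd b - snd p))).
  { unfold k; destruct x, y, b, p; unfold dist2; simpl; ring. }
  specialize (Hs (fst y - fst x) (snd y - snd x)).
  assert (Hd' : (fst y - fst x)^2 + (snd y - snd x)^2 < eps).
  { rewrite dist2_sym in Hd; exact Hd. }
  apply Rabs_def2 in Hs; auto. lra.
Qed.

Lemma nbhd (l : list point) p x : (forall w, In w l -> w <> p -> dist2 x p < dist2 x w) ->
  exists eps, 0 < eps /\ forall y, dist2 x y < eps -> forall w, In w l -> w <> p -> dist2 y p <= dist2 y w.
Proof.
  induction l as [|a l IH]; intros H.
  - exists 1; split; [lra| intros y _ w []].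
  - destruct IH as [e1 [He1 H1]]. { intros w Hw; apply H; right; auto. }
    destruct (classic (a = p)) as [Ea|Na].
    + exists e1; split; auto. intros y Hy w [->|Hw] Hwp; [contradiction| auto].
    + assert (Hk: 0 < dist2 x a - dist2 x p) by (specialize (H a (or_introl eq_refl) Na); lra).
      destruct (small_lin (fst p - fst a) (snd p - snd a) _ Hk) as [e2 [He2 H2]].
      exists (Rmin e1 e2); split. { apply Rmin_pos; auto. }
      intros y Hy w [->|Hw] Hwp.
      * assert (E: dist2 y w - dist2 y p = (dist2 x w - dist2 x p) + 2*((fst y - fst x)*(fst p - fst w) + (snd y - snd x)*(snd p - snd w))).
        { destruct x, y, w, p; unfold dist2; simpl; ring. }
        specialize (H2 (fst y - fst x) (snd y - snd x)).
        assert (Hd' : (fst y - fst x)^2 + (snd y - snd x)^2 < e2).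
        { rewrite dist2_sym in Hy. eapply Rlt_le_trans; [exact Hy| apply Rmin_r]. }
        apply Rabs_def2 in H2; auto. lra.
      * apply H1; auto. eapply Rlt_le_trans; [exact Hy| apply Rmin_l].
Qed.

Lemma bd_tight W p x : boundary (Vreg W p) x ->
  exists w, In w W /\ w <> p /\ dist2 x w = dist2 x p.
Proof.
  intros H. apply NNPP; intro Hn.
  assert (Hlt : forall w, In w W -> w <> p -> dist2 x p < dist2 x w).
  { intros w Hw Hwp. pose proof (bd_in W p x H w (or_intror Hw)) as H0.
    destruct H0 as [|E]; auto. exfalso; apply Hn; exists w; auto. }
  destruct (nbhd W p x Hlt) as [eps [He Hn']].
  destruct (H eps He) as [_ [z [Hz Hd]]].
  apply Hz. apply Vreg_intro. intros b Hb.
  destruct (classic (b = p)) as [->|Nb]; [lra|]. apply (Hn' z Hd b Hb Nb).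
Qed.

Lemma bd_intro W p x w : Vreg W p x -> In w W -> w <> p -> dist2 x w = dist2 x p ->
  boundary (Vreg W p) x.
Proof.
  intros Hx Hw Hwp E eps He. split.
  - exists x; split; auto. rewrite dist2_self; auto.
  - set (D := dist2 w p). assert (HD: 0 < D) by (apply dist2_pos; auto).
    set (s := eps / (eps + D + 1)).
    assert (Hs: s*(eps+D+1) = eps) by (unfold s; field; lra).
    assert (Hs0: 0 < s) by (unfold s; apply Rdiv_lt_0_compat; lra).
    assert (Hs1: s < 1) by nra.
    exists (fst x + s*(fst w - fst p), snd x + s*(snd w - snd p)). split.
    + intro Hz. specialize (Hz w (or_intror Hw)).
      assert (E2: dist2 (fst x + s*(fst w - fst p), snd x + s*(snd w - snd p)) w
                 - dist2 (fst x + s*(fst w - fst p), snd x + s*(snd w - snd p)) p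
                 = (dist2 x w - dist2 x p) - 2*s*D).
      { unfold D; destruct x, w, p; unfold dist2; simpl; ring. }
      nra.
    + assert (E2: dist2 x (fst x + s*(fst w - fst p), snd x + s*(snd w - snd p)) = s^2*D).
      { unfold D; destruct x, w, p; unfold dist2; simpl; ring. }
      rewrite E2. nra.
Qed.

Lemma onL W p q x : boundary (Vreg W p) x -> boundary (Vreg W q) x -> dist2 x p = dist2 x q.
Proof.
  intros Hp Hq.
  destruct (bd_tight W p x Hp) as [w [Hw [_ Ew]]].
  destruct (bd_tight W q x Hq) as [w' [Hw' [_ Ew']]].
  pose proof (bd_in W q x Hq w (or_intror Hw)).
  pose proof (bd_in W p x Hp w' (or_intror Hw')). lra.
Qed.

Lemma aff x y s a b :
  dist2 (line_pt x (fst y - fst x, snd y - snd x) s) a - dist2 (line_pt x (fst y - fst x, snd y - snd x) s) b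
  = (1-s)*(dist2 x a - dist2 x b) + s*(dist2 y a - dist2 y b).
Proof. destruct x, y, a, b; unfold line_pt, dist2; simpl; ring. Qed.

Lemma seg W p q x : p <> q -> Vreg W p x -> Vreg W q x -> dist2 x p <= dist2 x q ->
  exists z, Vreg W p z /\ Vreg W q z /\ dist2 z p = dist2 z q.
Proof.
  intros Hpq Hp Hq Hle.
  set (G := dist2 x q - dist2 x p). set (Dq := dist2 q p).
  assert (HD : 0 < Dq) by (apply dist2_pos; auto).
  set (s := G / (G + Dq)).
  assert (Hs : s * (G + Dq) = G) by (unfold s; field; unfold G; lra).
  assert (Hs0 : 0 <= s) by (unfold s; apply Rmult_le_pos; [unfold G; lra| left; apply Rinv_0_lt_compat; unfold G; lra]).
  assert (HG : 0 <= G) by (unfold G; lra).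
  assert (Hs1 : s <= 1) by nra.
  set (z := line_pt x (fst q - fst x, snd q - snd x) s).
  assert (Eq : dist2 z q = dist2 z p).
  { pose proof (aff x q s q p) as E. fold z in E. rewrite dist2_self in E.
    fold G Dq in E. assert ((1-s)*G + s*(0 - Dq) = G - s*(G+Dq)) by ring. lra. }
  assert (Vq : Vreg W q z).
  { apply Vreg_intro. intros b Hb. pose proof (aff x q s q b) as E. fold z in E.
    rewrite dist2_self in E. pose proof (Hq b (or_intror Hb)). pose proof (dist2_nonneg q b).
    nra. }
  exists z; split; [|split; auto].
  apply Vreg_intro. intros b Hb. pose proof (Vq b (or_intror Hb)). lra.
Qed.

Lemma Lpoint W p q x : p <> q -> Vreg W p x -> Vreg W q x ->
  exists z, Vreg W p z /\ Vreg W q z /\ dist2 z p = dist2 z q.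
Proof.
  intros Hpq Hp Hq. destruct (Rle_dec (dist2 x p) (dist2 x q)).
  - apply seg with x; auto.
  - destruct (seg W q p x) as [z [A1 [A2 A3]]]; auto; try lra.
    exists z; auto.
Qed.

Lemma findt (A : Type) (a b : A -> R) (l : list A) :
  (forall w, In w l -> 0 <= a w) -> (exists w0, In w0 l /\ b w0 < 0) ->
  exists t, 0 <= t /\ (forall w, In w l -> 0 <= a w + b w * t) /\
    exists w, In w l /\ b w < 0 /\ a w + b w * t = 0.
Proof.
  induction l as [|c l IH]; intros Ha Hb.
  - destruct Hb as [w0 [[] _]].
  - assert (Hc : 0 <= a c) by (apply Ha; left; auto).
    set (tc := a c / (- b c)).
    destruct (classic (exists w0, In w0 l /\ b w0 < 0)) as [Hl|Hl].
    + destruct IH as [t [Ht [Hall [w [Hw [Hbw Haw]]]]]]; auto.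
      { intros w Hw; apply Ha; right; auto. }
      destruct (Rle_dec 0 (b c)) as [Hbc|Hbc].
      * exists t; split; auto. split.
        -- intros w' [<-|Hw']; [nra| auto].
        -- exists w; split; [right; auto| auto].
      * apply Rnot_le_lt in Hbc.
        assert (Htc : a c + b c * tc = 0) by (unfold tc; field; lra).
        assert (Htc0 : 0 <= tc) by (unfold tc; apply Rmult_le_pos; [lra| left; apply Rinv_0_lt_compat; lra]).
        destruct (Rle_dec t tc) as [Htt|Htt].
        -- exists t; split; auto. split.
           ++ intros w' [<-|Hw']; [nra| auto].
           ++ exists w; split; [right; auto| auto].
        -- exists tc; split; auto. split.
           ++ intros w' [<-|Hw']; [lra|].
              pose proof (Hall w' Hw'). assert (0 <= a w') by (apply Ha; right; auto).
              destruct (Rle_dec 0 (b w')); nra.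
           ++ exists c; split; [left; auto| auto].
    + destruct Hb as [w0 [[<-|Hw0] Hb0]].
      * assert (Htc : a c + b c * tc = 0) by (unfold tc; field; lra).
        assert (Htc0 : 0 <= tc) by (unfold tc; apply Rmult_le_pos; [lra| left; apply Rinv_0_lt_compat; lra]).
        exists tc; split; auto. split.
        -- intros w' [<-|Hw']; [lra|].
           assert (0 <= a w') by (apply Ha; right; auto).
           destruct (Rle_dec 0 (b w')); [nra|]. exfalso; apply Hl; exists w'; split; auto; lra.
        -- exists c; split; [left; auto| auto].
      * exfalso; apply Hl; exists w0; auto.
Qed.

Lemma step2 W p q z u w0 : Vreg W p z -> Vreg W q z -> dist2 z p = dist2 z q ->
  fst u * (fst q - fst p) + snd u * (snd q - snd p) = 0 ->
  In w0 W -> 2*(fst u*(fst p - fst w0) + snd u*(snd p - snd w0)) < 0 ->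
  exists x, boundary (Vreg W p) x /\ boundary (Vreg W q) x.
Proof.
  intros Hp Hq HL Hu Hw0 Hs0.
  destruct (findt point (fun w => dist2 z w - dist2 z p)
      (fun w => 2*(fst u*(fst p - fst w) + snd u*(snd p - snd w))) W)
    as [t [Ht [Hall [w [Hw [Hbw Haw]]]]]].
  { intros w Hw. pose proof (Hp w (or_intror Hw)). lra. }
  { exists w0; auto. }
  set (y := (fst z + t * fst u, snd z + t * snd u)).
  assert (Ey : forall w, dist2 y w - dist2 y p = (dist2 z w - dist2 z p) +
       2*(fst u*(fst p - fst w) + snd u*(snd p - snd w)) * t).
  { intros w'. unfold y. destruct z, u, w', p; unfold dist2; simpl; ring. }
  assert (HLy : dist2 y q = dist2 y p).
  { pose proof (Ey q) as E. assert (2*(fst u*(fst p - fst q) + snd u*(snd p - snd q)) = 0) by lra.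
    rewrite H in E. lra. }
  assert (Vp : Vreg W p y).
  { apply Vreg_intro. intros b Hb. pose proof (Ey b). pose proof (Hall b Hb). lra. }
  assert (Vq : Vreg W q y).
  { apply Vreg_intro. intros b Hb. pose proof (Vp b (or_intror Hb)). lra. }
  assert (Hwp : w <> p).
  { intros ->. replace (fst p - fst p) with 0 in Hbw by ring.
    replace (snd p - snd p) with 0 in Hbw by ring. lra. }
  assert (Hwq : w <> q).
  { intros ->. lra. }
  assert (Ew : dist2 y w = dist2 y p) by (pose proof (Ey w); lra).
  exists y; split.
  - apply bd_intro with w; auto.
  - apply bd_intro with w; auto. lra.
Qed.

Definition cr (p q w : point) : R :=
  (fst q - fst p) * (snd w - snd p) - (snd q - snd p) * (fst w - fst p).

Lemma exist_bd W p q : p <> q -> (exists a b, In a W /\ In b W /\ a <> b) ->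
  (forall w, In w W -> w <> p -> w <> q -> cr p q w <> 0) ->
  (exists x, Vreg W p x /\ Vreg W q x) ->
  exists x, boundary (Vreg W p) x /\ boundary (Vreg W q) x.
Proof.
  intros Hpq [a [b [Ha [Hb Hab]]]] NC [x [Hpx Hqx]].
  destruct (Lpoint W p q x Hpq Hpx Hqx) as [z [Vp [Vq HL]]].
  destruct (classic (In p W /\ In q W)) as [[HpW HqW]|NB].
  - exists z; split.
    + apply bd_intro with q; auto.
    + apply bd_intro with p; auto.
  - assert (Hw0 : exists w0, In w0 W /\ w0 <> p /\ w0 <> q).
    { destruct (classic (a = p)) as [->|Nap].
      - destruct (classic (b = q)) as [->|Nbq].
        + exfalso; auto.
        + exists b; repeat split; auto.
      - destruct (classic (a = q)) as [->|Naq].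
        + destruct (classic (b = p)) as [->|Nbp].
          * exfalso; auto.
          * exists b; repeat split; auto.
        + exists a; auto. }
    destruct Hw0 as [w0 [Hw0 [Hw0p Hw0q]]].
    pose proof (NC w0 Hw0 Hw0p Hw0q) as Hc. unfold cr in Hc.
    set (u0 := (-(snd q - snd p), fst q - fst p)).
    destruct (Rlt_dec (2*(fst u0*(fst p - fst w0) + snd u0*(snd p - snd w0))) 0) as [Hn|Hn].
    + apply step2 with z u0 w0; auto. unfold u0; simpl; ring.
    + apply step2 with z (- fst u0, - snd u0) w0; auto.
      * unfold u0; simpl; ring.
      * apply Rnot_lt_le in Hn. unfold u0 in *; simpl in *.
        destruct Hn as [Hn|Hn]; [nra|]. exfalso; apply Hc. nra.
Qed.

Lemma on_line_param (x p q : point) : p <> q -> dist2 x p = dist2 x q ->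
  exists t, x = line_pt ((fst p + fst q)/2, (snd p + snd q)/2) (-(snd q - snd p), fst q - fst p) t.
Proof.
  intros Hpq H. pose proof (dist2_pos _ _ Hpq) as HD.
  destruct x as [x1 x2], p as [p1 p2], q as [q1 q2]. unfold dist2 in *; simpl in *.
  set (D := (p1 - q1)^2 + (p2 - q2)^2) in *.
  assert (vd : (x1 - (p1+q1)/2)*(q1-p1) + (x2 - (p2+q2)/2)*(q2-p2) = 0) by nra.
  set (a := x1 - (p1+q1)/2) in *. set (b := x2 - (p2+q2)/2) in *.
  set (N := a*(-(q2-p2)) + b*(q1-p1)).
  assert (HD' : D <> 0) by (apply Rgt_not_eq; exact HD).
  assert (E1 : N*(-(q2-p2)) = a*D).
  { assert (N*(-(q2-p2)) - a*D = -(q1-p1)*0) by (rewrite <- vd; unfold N, D; ring). lra. }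
  assert (E2 : N*(q1-p1) = b*D).
  { assert (N*(q1-p1) - b*D = -(q2-p2)*0) by (rewrite <- vd; unfold N, D; ring). lra. }
  exists (N/D).
  unfold line_pt; simpl. f_equal.
  - replace (N/D*(-(q2-p2))) with (N*(-(q2-p2))/D) by (field; auto). rewrite E1.
    unfold a. field. auto.
  - replace (N/D*(q1-p1)) with (N*(q1-p1)/D) by (field; auto). rewrite E2.
    unfold b. field. auto.
Qed.

Definition tt (p q y : point) : R := -(snd q - snd p)*fst y + (fst q - fst p)*snd y.
Definition cu (p q w : point) : R := -(snd q - snd p)*(fst p - fst w) + (fst q - fst p)*(snd p - snd w).

Lemma vd_zero p q y y' : dist2 y p = dist2 y q -> dist2 y' p = dist2 y' q ->
  (fst y - fst y')*(fst q - fst p) + (snd y - snd y')*(snd q - snd p) = 0.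
Proof.
  intros H H'.
  assert (2*((fst y - fst y')*(fst q - fst p) + (snd y - snd y')*(snd q - snd p))
     = (dist2 y p - dist2 y q) - (dist2 y' p - dist2 y' q)) by (destruct y, y', p, q; unfold dist2; simpl; ring).
  lra.
Qed.

Lemma keyid p q y y' w : dist2 y p = dist2 y q -> dist2 y' p = dist2 y' q ->
  dist2 q p * ((dist2 y w - dist2 y p) - (dist2 y' w - dist2 y' p)) = 2*(tt p q y - tt p q y') * cu p q w.
Proof.
  intros H H'. pose proof (vd_zero p q y y' H H') as V.
  assert (E : dist2 q p * ((dist2 y w - dist2 y p) - (dist2 y' w - dist2 y' p)) - 2*(tt p q y - tt p q y') * cu p q w
     = 2*((fst y - fst y')*(fst q - fst p) + (snd y - snd y')*(snd q - snd p)) *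
         ((fst p - fst w)*(fst q - fst p) + (snd p - snd w)*(snd q - snd p))).
  { unfold tt, cu; destruct y, y', p, q, w; unfold dist2; simpl; ring. }
  rewrite V in E. lra.
Qed.

Lemma tdist p q y y' : p <> q -> dist2 y p = dist2 y q -> dist2 y' p = dist2 y' q ->
  tt p q y = tt p q y' -> y = y'.
Proof.
  intros Hpq H H' Ht. pose proof (vd_zero p q y y' H H') as V.
  pose proof (dist2_pos _ _ Hpq) as HD.
  assert (E : dist2 q p * dist2 y y' =
     ((fst y - fst y')*(fst q - fst p) + (snd y - snd y')*(snd q - snd p))^2 + (tt p q y - tt p q y')^2).
  { unfold tt; destruct y, y', p, q; unfold dist2; simpl; ring. }
  rewrite V, Ht in E. replace (tt p q y' - tt p q y') with 0 in E by ring.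
  apply dist2_zero. assert (E2 : dist2 q p * dist2 y y' = 0) by (rewrite E; ring).
  apply Rmult_integral in E2. destruct E2; [rewrite dist2_sym in HD; lra|auto].
Qed.

Lemma tight2 W p q x : boundary (Vreg W p) x -> boundary (Vreg W q) x -> ~ (In p W /\ In q W) ->
  exists w, In w W /\ w <> p /\ w <> q /\ dist2 x w = dist2 x p.
Proof.
  intros Hp Hq NB. pose proof (onL W p q x Hp Hq) as HL.
  destruct (bd_tight W p x Hp) as [w [Hw [Hwp Ew]]].
  destruct (bd_tight W q x Hq) as [w' [Hw' [Hwq Ew']]].
  destruct (classic (w = q)) as [->|Nwq].
  - destruct (classic (w' = p)) as [->|Nwp].
    + exfalso; auto.
    + exists w'; repeat split; auto. lra.
  - exists w; auto.
Qed.

Lemma mid_false a b c : a < 0 -> 0 < b -> 0 <= a*c -> 0 <= b*c -> c <> 0 -> False.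
Proof. intros. destruct (Rtotal_order c 0) as [H4|[H4|H4]]; [nra|auto|nra]. Qed.

Lemma reals3 t1 t2 t3 c1 c2 c3 : t1 <> t2 -> t1 <> t3 -> t2 <> t3 ->
  c1 <> 0 -> c2 <> 0 -> c3 <> 0 ->
  0 <= (t2 - t1)*c1 -> 0 <= (t3 - t1)*c1 ->
  0 <= (t1 - t2)*c2 -> 0 <= (t3 - t2)*c2 ->
  0 <= (t1 - t3)*c3 -> 0 <= (t2 - t3)*c3 -> False.
Proof.
  intros.
  destruct (Rtotal_order t1 t2) as [A|[A|A]]; [|contradiction|];
  destruct (Rtotal_order t2 t3) as [B|[B|B]]; try contradiction;
  destruct (Rtotal_order t1 t3) as [C|[C|C]]; try contradiction.
  all: first
    [ apply (mid_false (t1 - t2) (t3 - t2) c2); lra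
    | apply (mid_false (t1 - t3) (t2 - t3) c3); lra
    | apply (mid_false (t2 - t1) (t3 - t1) c1); lra
    | apply (mid_false (t3 - t2) (t1 - t2) c2); lra
    | apply (mid_false (t2 - t3) (t1 - t3) c3); lra
    | apply (mid_false (t3 - t1) (t2 - t1) c1); lra
    | lra ].
Qed.

Lemma pairineq W p q xi xj wi : p <> q ->
  dist2 xi p = dist2 xi q -> dist2 xj p = dist2 xj q -> Vreg W p xj -> In wi W ->
  dist2 xi wi = dist2 xi p -> 0 <= (tt p q xj - tt p q xi) * cu p q wi.
Proof.
  intros Hpq Hi Hj Vj Hw Ew. pose proof (keyid p q xj xi wi Hj Hi) as K.
  pose proof (Vj wi (or_intror Hw)). pose proof (dist2_pos _ _ Hpq) as HD. rewrite dist2_sym in HD.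
  rewrite Ew in K. replace (dist2 xi p - dist2 xi p) with 0 in K by ring.
  assert (0 <= dist2 q p * (dist2 xj wi - dist2 xj p - 0)) by (apply Rmult_le_pos; lra).
  lra.
Qed.

Lemma three W p q x1 x2 x3 : p <> q -> ~ (In p W /\ In q W) ->
  (forall w, In w W -> w <> p -> w <> q -> cr p q w <> 0) ->
  (boundary (Vreg W p) x1 /\ boundary (Vreg W q) x1) ->
  (boundary (Vreg W p) x2 /\ boundary (Vreg W q) x2) ->
  (boundary (Vreg W p) x3 /\ boundary (Vreg W q) x3) ->
  x1 <> x2 -> x1 <> x3 -> x2 <> x3 -> False.
Proof.
  intros Hpq NB NC [B1p B1q] [B2p B2q] [B3p B3q] N12 N13 N23.
  pose proof (onL _ _ _ _ B1p B1q) as L1.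
  pose proof (onL _ _ _ _ B2p B2q) as L2.
  pose proof (onL _ _ _ _ B3p B3q) as L3.
  pose proof (bd_in _ _ _ B1p) as V1.
  pose proof (bd_in _ _ _ B2p) as V2.
  pose proof (bd_in _ _ _ B3p) as V3.
  destruct (tight2 W p q x1 B1p B1q NB) as [w1 [Hw1 [Hw1p [Hw1q E1]]]].
  destruct (tight2 W p q x2 B2p B2q NB) as [w2 [Hw2 [Hw2p [Hw2q E2]]]].
  destruct (tight2 W p q x3 B3p B3q NB) as [w3 [Hw3 [Hw3p [Hw3q E3]]]].
  assert (Hcu : forall w, In w W -> w <> p -> w <> q -> cu p q w <> 0).
  { intros w Hw Hwp Hwq. assert (cu p q w = - cr p q w) by (unfold cu, cr; ring).
    rewrite H. intro H'. apply (NC w Hw Hwp Hwq). lra. }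
  assert (T : forall xi xj, xi <> xj -> dist2 xi p = dist2 xi q -> dist2 xj p = dist2 xj q ->
      tt p q xi <> tt p q xj).
  { intros xi xj N Hi Hj Ht. apply N. apply (tdist p q); auto. }
  apply (reals3 (tt p q x1) (tt p q x2) (tt p q x3) (cu p q w1) (cu p q w2) (cu p q w3));
    auto; apply pairineq with W; auto.
Qed.

Theorem mainTheorem4 (P W : list point) :
  (exists a b, In a P /\ In b P /\ a <> b) ->
  (exists a b, In a W /\ In b W /\ a <> b) ->
  general_position (fun x => In x P \/ In x W) ->
  forall p q, In p P -> In q P -> p <> q ->
    ( ( (forall x, ~ (boundary (Vreg W p) x /\ boundary (Vreg W q) x))
      \/ (exists a b, forall x, boundary (Vreg W p) x /\ boundary (Vreg W q) x ->
                                x = a \/ x = b)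
      \/ connected_subset_of_line
           (fun x => boundary (Vreg W p) x /\ boundary (Vreg W q) x) )
    /\ ((exists x, Vreg W p x /\ Vreg W q x) ->
        exists x, boundary (Vreg W p) x /\ boundary (Vreg W q) x) )
    /\ ( ~ (forall x, In x W <-> x = p \/ x = q) ->
         (witness_DG_adj P W p q <->
          exists x, boundary (Vreg W p) x /\ boundary (Vreg W q) x) ).
Proof.
  intros HP HW [GP _] p q Hp Hq Hpq.
  assert (NC : forall w, In w W -> w <> p -> w <> q -> cr p q w <> 0).
  { intros w Hw Hwp Hwq. apply (GP p q w); auto. }
  split; [split|].
  - destruct (classic (In p W /\ In q W)) as [[HpW HqW]|NB].
    + right; right. split.
      * exists ((fst p + fst q)/2, (snd p + snd q)/2), (-(snd q - snd p), fst q - fst p).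
        split.
        -- intro H. injection H as H1 H2. apply Hpq. destruct p, q; simpl in *; f_equal; lra.
        -- intros x [Bp Bq]. apply on_line_param; auto. apply (onL W); auto.
      * intros x y t [Bxp Bxq] [Byp Byq] Ht.
        pose proof (onL _ _ _ _ Bxp Bxq) as Lx. pose proof (onL _ _ _ _ Byp Byq) as Ly.
        pose proof (bd_in _ _ _ Bxp) as Vxp. pose proof (bd_in _ _ _ Bxq) as Vxq.
        pose proof (bd_in _ _ _ Byp) as Vyp. pose proof (bd_in _ _ _ Byq) as Vyq.
        set (z := line_pt x (fst y - fst x, snd y - snd x) t).
        assert (Lz : dist2 z q = dist2 z p).
        { pose proof (aff x y t q p) as A. fold z in A. rewrite Lx, Ly in A. lra. }
        assert (Vzp : Vreg W p z).
        { apply Vreg_intro. intros b Hb. pose proof (aff x y t p b) as A. fold z in A.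
          pose proof (Vxp b (or_intror Hb)). pose proof (Vyp b (or_intror Hb)). nra. }
        assert (Vzq : Vreg W q z).
        { apply Vreg_intro. intros b Hb. pose proof (Vzp b (or_intror Hb)). lra. }
        split.
        -- apply bd_intro with q; auto.
        -- apply bd_intro with p; auto; lra.
    + right; left. apply NNPP; intro Hn.
      assert (Hex : forall a b, exists x, (boundary (Vreg W p) x /\ boundary (Vreg W q) x) /\ x <> a /\ x <> b).
      { intros a b. apply NNPP; intro H2. apply Hn. exists a, b. intros x Bx.
        apply NNPP; intro H3. apply H2. exists x. split; [auto|]; split; intro; apply H3; auto. }
      destruct (Hex (0,0) (0,0)) as [x1 [B1 _]].
      destruct (Hex x1 x1) as [x2 [B2 [N21 _]]].
      destruct (Hex x1 x2) as [x3 [B3 [N31 N32]]].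
      apply (three W p q x1 x2 x3); auto.
  - intros H. apply exist_bd; auto.
  - intros _. split.
    + intros [_ [_ [_ [c [r2 [Hr [Ep [Eq Hw]]]]]]]].
      apply exist_bd; auto. exists c.
      split; apply Vreg_intro; intros b Hb; specialize (Hw b Hb);
        rewrite dist2_sym, (dist2_sym c b); lra.
    + intros [x [Bp Bq]]. pose proof (onL _ _ _ _ Bp Bq) as L.
      split; [auto|]. split; [auto|]. split; [auto|].
      exists x, (dist2 p x).
      assert (Hr : 0 < dist2 p x).
      { destruct (Rle_lt_or_eq_dec 0 (dist2 p x) (dist2_nonneg p x)) as [|E]; auto.
        exfalso. apply Hpq. assert (p = x) by (apply dist2_zero; auto).
        assert (q = x).
        { apply dist2_zero. rewrite dist2_sym, <- L, dist2_sym; auto. }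
        congruence. }
      split; [exact Hr|]. split; [reflexivity|]. split.
      * rewrite dist2_sym, <- L, dist2_sym; auto.
      * intros w Hw. pose proof (bd_in _ _ _ Bp w (or_intror Hw)).
        rewrite (dist2_sym w x), (dist2_sym p x). lra.
Qed.
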